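(* Assume the Mixing, Uniformly Bounded Functions and Uniform Bracketing Entropy assumptions. For $g\in\mathcal G^*$ let $h_g(Z)=\mathbb E[g_A(S,U)\mid Z]$. Then \[ \sup_{g\in\mathcal G^*}\Big|\frac1n\sum_{i=1}^nh_g(Z_i)^2-\mathbb E[h_g(Z)^2]\Big|=o_p(1). \]
   Context: Setting: MDPUC with finite state space $\mathcal S$, actions $[m]$, confounder space $\mathcal U$ and iid confounders; data $Z_i=(S_i,A_i,S_i')$, $i\in[n]$, generated by a behavior policy from a stationary chain of $X=(Z,U)$; expectations are under this stationary distribution; $n\to\infty$. Mixing: for some $2<p\le\infty$, $\sum_kk^{2/(p-2)}\beta(k)<\infty$ for the $\beta$-mixing coefficients of the $X$-chain. $\mathcal G$ is a normed class of $g=(g_1,\dots,g_m)$, $g_a:\mathcal S\times\mathcal U\to\mathbb R$; $\mathcal G^*=\{g/\|g\|:g\in\mathcal G,\|g\|>0\}$; $\mathcal G^*_a=\{g_a:g\in\mathcal G^*\}$. Uniformly Bounded Functions: there is $0<G<\infty$ with $g_a(s,u)\le G$ for all $g\in\mathcal G^*$, $a,s,u$. Uniform Bracketing Entropy: $\int_0^\infty\sqrt{\log N_{[]}(\epsilon,\mathcal G^*_a,L_p)}d\epsilon<\infty$ for each $a$, with $p$ as in Mixing, $N_{[]}$ the bracketing number. *)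

(* Defs.v *)
From HB Require Import structures.
From mathcomp Require Import all_boot all_order all_algebra.
From mathcomp Require Import all_classical all_reals all_analysis.
Set Implicit Arguments. Unset Strict Implicit. Unset Printing Implicit Defensive.
Import Order.TTheory GRing.Theory Num.Theory.
Import numFieldNormedType.Exports.
Local Open Scope classical_set_scope.
Local Open Scope ring_scope.

Section MDPUC.
Variables (R : realType) (d : measure_display) (Omega : measurableType d)
  (P : probability Omega R).
Variables (S : finType) (m : nat) (dU : measure_display) (U : measurableType dU).

(* observed data Z = (S, A, S') *)
Definition Zobs := (S * 'I_m * S)%type.
Definition gfun := 'I_m -> S -> U -> R.

Variables (Zv : nat -> Omega -> Zobs) (Uv : nat -> Omega -> U).

(* strict stationarity of X_i = (Z_i, U_i): all finite-dimensional laws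
   (on measurable rectangles, a generating pi-system) are shift invariant *)
Definition stationary : Prop :=
  forall (k t : nat) (zs : 'I_k.+1 -> Zobs) (Bs : 'I_k.+1 -> set U),
    (forall i, measurable (Bs i)) ->
    P [set w | forall i : 'I_k.+1, Zv (t + i) w = zs i /\ Bs i (Uv (t + i) w)]
    = P [set w | forall i : 'I_k.+1, Zv i w = zs i /\ Bs i (Uv i w)].

Definition gen_X (j : nat) : set (set Omega) :=
  [set A | (exists z, A = Zv j @^-1` [set z]) \/
           (exists B, measurable B /\ A = Uv j @^-1` B)].

Definition past (t : nat) : set (set Omega) :=
  smallest (sigma_algebra setT) [set A | exists j, (j <= t)%N /\ gen_X j A].
Definition future (t : nat) : set (set Omega) :=
  smallest (sigma_algebra setT) [set A | exists j, (t <= j)%N /\ gen_X j A].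

Definition fin_partition (F : set (set Omega)) (I : nat) (a : 'I_I -> set Omega) :=
  [/\ forall i, F (a i),
      forall i j, i != j -> a i `&` a j = set0 &
      forall w, exists i, a i w].

Definition beta_coef (F1 F2 : set (set Omega)) : \bar R :=
  ereal_sup [set x | exists (I J : nat) (a : 'I_I -> set Omega) (b : 'I_J -> set Omega),
     [/\ fin_partition F1 a, fin_partition F2 b &
     x = (((2%:R)^-1)%:E * \sum_(i < I) \sum_(j < J)
            `| P (a i `&` b j) - P (a i) * P (b j) |)%E ]].

Definition beta_mix (k : nat) : \bar R :=
  ereal_sup [set beta_coef (past t) (future (t + k)) | t in [set: nat]].

Definition mix_exp (p : \bar R) : R :=
  match p with r%:E => 2%:R / (r - 2%:R) | _ => 0 end.

Definition Mixing (p : \bar R) : Prop :=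
  (2%:E < p)%E /\
  (\sum_(1 <= k <oo) (((k%:R : R) `^ mix_exp p)%:E * beta_mix k) < +oo)%E.

(* stationary (S, A, U), read off at time 0 *)
Definition S0 (w : Omega) : S := (Zv 0 w).1.1.
Definition A0 (w : Omega) : 'I_m := (Zv 0 w).1.2.
Definition U0 (w : Omega) : U := Uv 0 w.

Definition is_norm (nrm : gfun -> R) : Prop :=
  [/\ forall g, 0 <= nrm g,
      forall g, nrm g = 0 -> g = (fun _ _ _ => 0),
      forall (c : R) g, nrm (fun a s u => c * g a s u) = `|c| * nrm g &
      forall g1 g2, nrm (fun a s u => g1 a s u + g2 a s u) <= nrm g1 + nrm g2].

Definition Gstar (nrm : gfun -> R) (G : set gfun) : set gfun :=
  [set f | exists g, [/\ G g, 0 < nrm g & f = (fun a s u => g a s u / nrm g)]].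

Definition Gstar_a (nrm : gfun -> R) (G : set gfun) (a : 'I_m) : set (S -> U -> R) :=
  [set (g a) | g in Gstar nrm G].

Definition UniformlyBounded (nrm : gfun -> R) (G : set gfun) : Prop :=
  exists Gb : R, 0 < Gb /\
    forall g, Gstar nrm G g -> forall a s u, `|g a s u| <= Gb.

(* L_p(P_{(S,U)}) norm of f : S x U -> R under the stationary law *)
Definition LpSU (p : \bar R) (f : S -> U -> R) : \bar R :=
  Lnorm P p (fun w => (f (S0 w) (U0 w))%:E).

Definition bracket_cover (p : \bar R) (eps : R) (F : set (S -> U -> R)) (k : nat) : Prop :=
  exists (l u : 'I_k -> S -> U -> R),
    [/\ forall i s, measurable_fun setT (l i s) /\ measurable_fun setT (u i s),
        forall i, (LpSU p (fun s x => (u i s x - l i s x)%R) <= eps%:E)%E &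
        forall f, F f -> exists i, forall s x, l i s x <= f s x <= u i s x].

(* bracketing number N_[](eps, F, L_p)  (+oo if no finite cover) *)
Definition bracketing_number (p : \bar R) (eps : R) (F : set (S -> U -> R)) : \bar R :=
  ereal_inf [set (k%:R)%:E | k in bracket_cover p eps F].

Definition sqrt_log_ext (N : \bar R) : \bar R :=
  match N with r%:E => (Num.sqrt (ln r))%:E | _ => +oo%E end.

Definition UniformBracketingEntropy (p : \bar R) (nrm : gfun -> R) (G : set gfun) : Prop :=
  forall a : 'I_m,
    (\int[@lebesgue_measure R]_(e in [set e : R | (0 < e)%R])
        sqrt_log_ext (bracketing_number p e (Gstar_a nrm G a)) < +oo)%E.

(* h_g(z) = E[g_A(S,U) | Z = z]  (Z takes finitely many values) *)
Definition hcond (g : gfun) (z : Zobs) : R :=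
  fine (\int[P]_(w in Zv 0 @^-1` [set z]) (g (A0 w) (S0 w) (U0 w))%:E)
  / fine (P (Zv 0 @^-1` [set z])).

Definition sup_dev (nrm : gfun -> R) (G : set gfun) (n : nat) (w : Omega) : \bar R :=
  ereal_sup [set `| ((n%:R)^-1 * \sum_(i < n) (hcond g (Zv i w)) ^+ 2)%:E
                   - \int[P]_v ((hcond g (Zv 0 v)) ^+ 2)%:E |%E
            | g in Gstar nrm G].

End MDPUC.

(* Main.v *)
Require Import Defs.
From HB Require Import structures.
From mathcomp Require Import all_boot all_order all_algebra.
From mathcomp Require Import all_classical all_reals all_analysis.
From mathcomp Require Import ring lra zify.
From mathcomp Require Import measurable_realfun lebesgue_integral.
Import Order.TTheory GRing.Theory Num.Theory.
Import numFieldNormedType.Exports.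
Local Open Scope classical_set_scope.
Local Open Scope ring_scope.
Lemma dbl_bound (R : realType) (c : nat -> nat -> R) (b : nat -> R) M :
  (forall i j, c i j = c j i) -> (forall i, c i i <= 1) ->
  (forall i j, (i < j)%N -> c i j <= b (j - i)%N) ->
  (forall n, \sum_(k < n) b k.+1 <= M) ->
  forall n, \sum_(i < n) \sum_(j < n) c i j <= n%:R * (1 + 2 * M).
Proof.
move=> cs c1 cb bM; elim=> [|n IH]; first by rewrite big_ord0 mul0r.
have col : \sum_(i < n) c i n <= M.
  apply: le_trans (bM n).
  rewrite (reindex_inj rev_ord_inj) /=; apply: ler_sum => i _.
  have h : (n - i.+1 < n)%N by have := ltn_ord i; lia.
  apply: le_trans (cb _ _ h) _.
  have -> : (n - (n - i.+1))%N = i.+1 by have := ltn_ord i; lia.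
  by [].
have E : \sum_(i < n.+1) \sum_(j < n.+1) c i j =
   \sum_(i < n) \sum_(j < n) c i j + \sum_(i < n) c i n
   + \sum_(j < n) c n j + c n n.
  rewrite big_ord_recr /= big_ord_recr /=.
  rewrite (eq_bigr (fun i : 'I_n => \sum_(j < n) c i j + c i n)); last first.
    by move=> i _; rewrite big_ord_recr.
  by rewrite big_split /= !addrA.
have row : \sum_(j < n) c n j <= M.
  by rewrite (eq_bigr (fun j : 'I_n => c j n)) // => j _; rewrite cs.
rewrite E -natr1 mulrDl mul1r.
have := c1 n; lra.
Qed.

Section Aux.
Variables (R : realType) (d : measure_display) (Omega : measurableType d)
  (P : probability Omega R) (S : finType) (m : nat) (dU : measure_display)
  (U : measurableType dU)
  (Zv : nat -> Omega -> Zobs S m) (Uv : nat -> Omega -> U).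
Hypothesis mZ : forall i z, measurable (Zv i @^-1` [set z]).

Local Notation Z := (Zobs S m).
Definition Ev i (z : Z) := Zv i @^-1` [set z].

Lemma mEv i z : measurable (Ev i z). Proof. exact: mZ. Qed.

Lemma stat_E (st : stationary P Zv Uv) i z : P (Ev i z) = P (Ev 0 z).
Proof.
have := st 0%N i (fun _ => z) (fun _ => setT) (fun _ => measurableT).
have -> : [set w | forall i0 : 'I_1, Zv (i + i0) w = z /\ [set: U] (Uv (i + i0) w)]
   = Ev i z.
  apply/seteqP; split => w /=.
    by move=> /(_ ord0) [] /=; rewrite addn0.
  by move=> H i0; rewrite (ord1 i0) /= addn0.
have -> // : [set w | forall i0 : 'I_1, Zv i0 w = z /\ [set: U] (Uv i0 w)]
   = Ev 0 z.
apply/seteqP; split => w /=.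
  by move=> /(_ ord0) [].
by move=> H i0; rewrite (ord1 i0) /=.
Qed.

Lemma past_E i z : past Zv Uv i (Ev i z).
Proof.
apply: sub_gen_smallest; exists i; split => //; left; by exists z.
Qed.

Lemma future_E j z : future Zv Uv j (Ev j z).
Proof.
apply: sub_gen_smallest; exists j; split => //; left; by exists z.
Qed.

Definition part2 (A : set Omega) : 'I_2 -> set Omega :=
  fun k => if k == ord0 then A else ~` A.

Lemma part2_ok (F : set (set Omega)) A :
  sigma_algebra setT F -> F A -> fin_partition F (part2 A).
Proof.
move=> sF FA; split.
- move=> k; rewrite /part2; case: ifP => _ //.
  rewrite -setTD; by case: sF => _ + _; apply.
- move=> k l kl; rewrite /part2.
  have [k0|k0] := eqVneq k ord0; have [l0|l0] := eqVneq l ord0.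
  + by move: kl; rewrite k0 l0 eqxx.
  + by rewrite setICr.
  + by rewrite setICl.
  + exfalso; move/eqP: kl; apply; apply: val_inj.
    have h1 (o : 'I_2) : o != ord0 -> val o = 1%N.
      by case: o => [[|[|o]] op] //=.
    by rewrite h1 // h1.
- move=> w; case: (pselect (A w)) => Aw.
    by exists ord0; rewrite /part2 eqxx.
  by exists ord_max; rewrite /part2.
Qed.
Lemma cov_bound i j z : (i < j)%N ->
  ((2^-1)%:E * `|P (Ev i z `&` Ev j z) - P (Ev i z) * P (Ev j z)|
  <= beta_mix P Zv Uv (j - i))%E.
Proof.
move=> ij.
rewrite /beta_mix; apply: le_trans (ereal_sup_ubound _); last first.
  by exists i => //.
have -> : (i + (j - i))%N = j by rewrite subnKC // ltnW.
rewrite /beta_coef; apply: le_trans (ereal_sup_ubound _); last first.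
  exists 2%N, 2%N, (part2 (Ev i z)), (part2 (Ev j z)); split.
  - apply: part2_ok; [exact: smallest_sigma_algebra| exact: past_E].
  - apply: part2_ok; [exact: smallest_sigma_algebra| exact: future_E].
  - reflexivity.
rewrite lee_wpmul2l // ?lee_fin ?invr_ge0 ?ler0n //.
rewrite !big_ord_recl !big_ord0 /part2 /=.
rewrite -addeA; apply: lee_paddr; last exact: lexx.
by repeat apply: adde_ge0.
Qed.
Lemma beta_coef_ge0 (F1 F2 : set (set Omega)) :
  sigma_algebra setT F1 -> sigma_algebra setT F2 -> (0 <= beta_coef P F1 F2)%E.
Proof.
move=> s1 s2; rewrite /beta_coef; apply: le_trans (ereal_sup_ubound _); last first.
  exists 2%N, 2%N, (part2 set0), (part2 set0); split.
  - by apply: part2_ok => //; case: s1.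
  - by apply: part2_ok => //; case: s2.
  - reflexivity.
apply: mule_ge0; first by rewrite lee_fin invr_ge0 ler0n.
by apply: sume_ge0 => k _; apply: sume_ge0.
Qed.

Lemma beta_mix_ge0 k : (0 <= beta_mix P Zv Uv k)%E.
Proof.
rewrite /beta_mix; apply: le_trans (ereal_sup_ubound _); last by exists 0%N.
by apply: beta_coef_ge0; exact: smallest_sigma_algebra.
Qed.

Lemma beta_sum p : Mixing P Zv Uv p -> exists M : R,
  (forall n, \sum_(k < n) fine (beta_mix P Zv Uv k.+1) <= M) /\
  (forall k, beta_mix P Zv Uv k.+1 \is a fin_num).
Proof.
case=> p2 fin.
set L := (X in (X < +oo)%E) in fin.
have e0 : 0 <= mix_exp p.
  case: p p2 {L fin} => [r||] //=; rewrite lte_fin => r2.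
  by rewrite divr_ge0 // subr_ge0 ltW.
have ps n : (\sum_(k < n) beta_mix P Zv Uv k.+1 <= L)%E.
  apply: le_trans (nneseries_lim_ge n.+1 _); last first.
    move=> k _ _; apply: mule_ge0; last exact: beta_mix_ge0.
    by rewrite lee_fin powR_ge0.
  rewrite big_add1 /= big_mkord; apply: lee_sum => k _.
  apply: lee_pemull; first exact: beta_mix_ge0.
  have h1 : (1 <= (k.+1%:R : R)) by rewrite ler1n.
  by rewrite lee_fin; apply: le_trans (ler_powR h1 e0); rewrite powRr0.
have L0 : (0 <= L)%E by apply: le_trans (ps 0%N); rewrite big_ord0.
have Lfin : L \is a fin_num by rewrite ge0_fin_numE.
have bfin k : beta_mix P Zv Uv k.+1 \is a fin_num.
  rewrite ge0_fin_numE ?beta_mix_ge0 //; apply: le_lt_trans fin.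
  apply: le_trans (ps k.+1); rewrite big_ord_recr /=.
  by apply: lee_paddl => //; apply: sume_ge0 => i _; exact: beta_mix_ge0.
exists (fine L); split => // n.
rewrite sum_fine //; rewrite fine_le //.
  by apply/sum_fin_numP => i _ _; exact: bfin.
Qed.
Lemma indic01 (A : set Omega) w : 0 <= (\1_A w : R) <= 1.
Proof. by rewrite indicE; case: (w \in A); rewrite /= ?lexx ?ler01. Qed.

Lemma int_sum_indic (I : eqType) (s : seq I) (a : I -> R) (A : I -> set Omega) :
  (forall i, 0 <= a i) -> (forall i, measurable (A i)) ->
  (\int[P]_w (\sum_(i <- s) a i * \1_(A i) w)%:E =
   (\sum_(i <- s) a i * fine (P (A i)))%:E)%E.
Proof.
move=> a0 mA.
under eq_integral do rewrite -sumEFin.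
rewrite ge0_integral_sum //; last 2 first.
- move=> i; apply: measurableT_comp => //; apply: measurable_funM => //.
  try exact: measurable_indic.
- by move=> i w _; rewrite lee_fin mulr_ge0 //; case/andP: (indic01 (A i) w).
rewrite -sumEFin; apply: eq_bigr => i _.
under eq_integral do rewrite EFinM.
rewrite ge0_integralZl_EFin //.
- rewrite integral_indic // setIT EFinM fineK //.
  exact: fin_num_measure.
- by apply: measurableT_comp => //; exact: measurable_indic.
Qed.
Definition Avg n z w : R := n%:R^-1 * \sum_(i < n) \1_(Ev i z) w.
Definition pz z : R := fine (P (Ev 0 z)).

Lemma mAvg n z : measurable_fun setT (Avg n z).
Proof.
apply: measurable_funM => //.
rewrite [X in measurable_fun _ X](_ : _ = fun w => \sum_(i <- index_enum 'I_n) \1_(Ev i z) w) //.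
apply: measurable_sum => i; exact: measurable_indic (mEv _ _).
Qed.

Lemma pz_ge0 z : 0 <= pz z.
Proof. by rewrite /pz fine_ge0. Qed.

Lemma int_dev (st : stationary P Zv Uv) n z : (0 < n)%N ->
  (\int[P]_w ((Avg n z w - pz z)^+2)%:E =
   ((n%:R^-1)^+2 * \sum_(i < n) \sum_(j < n)
      (fine (P (Ev i z `&` Ev j z)) - pz z ^+ 2))%:E)%E.
Proof.
move=> n0.
set c : R := n%:R^-1; set p := pz z.
have p0 : 0 <= p := pz_ge0 z.
have c0 : 0 <= c by rewrite /c invr_ge0 ler0n.
have Pi i : fine (P (Ev i z)) = p by rewrite /p /pz stat_E.
have sq w : Avg n z w ^+ 2 = \sum_(pr : 'I_n * 'I_n)
     c^+2 * \1_(Ev pr.1 z `&` Ev pr.2 z) w.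
  rewrite -(pair_big xpredT xpredT (fun i j : 'I_n => c^+2 * \1_(Ev i z `&` Ev j z) w)) /=.
  rewrite /Avg exprMn [(\sum_(_ < _) _) ^+ 2]expr2 big_distrlr mulr_sumr; apply: eq_bigr => i _.
  by rewrite mulr_sumr; apply: eq_bigr => j _; rewrite indicI.
have lin w : 2 * p * Avg n z w = \sum_(i < n) (2 * p * c) * \1_(Ev i z) w.
  by rewrite /Avg mulrA mulr_sumr.
have I1 : (\int[P]_w (Avg n z w ^+ 2 + p ^+ 2)%:E =
   (\sum_(pr : 'I_n * 'I_n) c^+2 * fine (P (Ev pr.1 z `&` Ev pr.2 z)) + p ^+ 2)%:E)%E.
  under eq_integral do rewrite EFinD.
  rewrite ge0_integralD //.
  - under eq_integral do rewrite sq.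
    rewrite int_sum_indic //; last by move=> pr; apply: measurableI; exact: mEv.
    - rewrite integral_cst //= probability_setT mule1 EFinD //.
    - by move=> pr; rewrite exprn_ge0.
  - by move=> w _; rewrite lee_fin sqr_ge0.
  - apply: measurableT_comp => //; apply: measurable_funX; exact: mAvg.
  - by move=> w _; rewrite lee_fin sqr_ge0.
have I2 : (\int[P]_w (2 * p * Avg n z w)%:E =
   (\sum_(i < n) (2 * p * c) * p)%:E)%E.
  under eq_integral do rewrite lin.
  rewrite int_sum_indic //.
  - by congr EFin; apply: eq_bigr => i _; rewrite Pi.
  - by move=> i; rewrite !mulr_ge0.
  - by move=> i; exact: mEv.
have I3 : (\int[P]_w ((Avg n z w - p)^+2)%:E + \int[P]_w (2 * p * Avg n z w)%:E =
   \int[P]_w (Avg n z w ^+ 2 + p ^+ 2)%:E)%E.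
  rewrite -ge0_integralD //.
  - by apply: eq_integral => w _; rewrite -EFinD; congr EFin; ring.
  - by move=> w _; rewrite lee_fin sqr_ge0.
  - apply: measurableT_comp => //; apply: measurable_funX.
    by apply: measurable_funB => //; exact: mAvg.
  - move=> w _; rewrite lee_fin; apply: mulr_ge0; first by rewrite mulr_ge0.
    rewrite /Avg; apply: mulr_ge0 => //; apply: sumr_ge0 => i _.
    by case/andP: (indic01 (Ev i z) w).
  - apply: measurableT_comp => //; apply: measurable_funM => //; exact: mAvg.
move: I3; rewrite I1 I2.
set x := (\int[P]_w _)%E.
have ext (y : \bar R) a b : (y + a%:E = b%:E -> y = (b - a)%:E)%E.
  by case: y => [r||] //= [<-]; rewrite addrK.
move=> /ext ->; congr EFin.
set Q := \sum_(i < n) \sum_(j < n) fine (P (Ev i z `&` Ev j z)).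
have -> : \sum_(pr : 'I_n * 'I_n) c^+2 * fine (P (Ev pr.1 z `&` Ev pr.2 z)) = c^+2 * Q.
  rewrite /Q mulr_sumr.
  under [RHS]eq_bigr do rewrite mulr_sumr.
  by rewrite pair_big /=.
under [in RHS]eq_bigr do rewrite sumrB sumr_const card_ord.
rewrite sumrB sumr_const card_ord -/Q sumr_const card_ord.
rewrite -mulrnA -[_ *+ (n * n)]mulr_natr -[_ *+ n]mulr_natr /c natrM.
have nz : n%:R != 0 :> R by rewrite pnatr_eq0 -lt0n.
by field.
Qed.
Lemma PE_fin (A : set Omega) : measurable A -> P A = (fine (P A))%:E.
Proof. by move=> mA; rewrite fineK // fin_num_measure. Qed.

Lemma int_bound (st : stationary P Zv Uv) pp : Mixing P Zv Uv pp ->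
  exists K : R, forall n z, (0 < n)%N ->
  (\int[P]_w ((Avg n z w - pz z)^+2)%:E <= (K / n%:R)%:E)%E.
Proof.
move=> /beta_sum [M [bM bfin]].
exists (1 + 2 * (2 * M)) => n z n0.
rewrite int_dev //.
set p := pz z.
pose c i j := fine (P (Ev i z `&` Ev j z)) - p ^+ 2.
have Pi i : P (Ev i z) = p%:E by rewrite stat_E // PE_fin //; exact: mEv.
have := @dbl_bound R c (fun k => 2 * fine (beta_mix P Zv Uv k)) (2 * M).
move=> /(_ _ _ _ _ n) H.
rewrite lee_fin.
have nz : 0 < n%:R :> R by rewrite ltr0n.
apply: le_trans (_ : n%:R^-1 ^+ 2 * (n%:R * (1 + 2 * (2 * M))) <= _); last first.
  rewrite le_eqVlt; apply/orP; left; apply/eqP; field.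
  by rewrite gt_eqF.
apply: ler_wpM2l; first by rewrite exprn_ge0 // invr_ge0 ler0n.
apply: H.
- by move=> i j; rewrite /c setIC.
- move=> i; rewrite /c setIid Pi /=.
  have p1 : p <= 1.
    by rewrite /p /pz -lee_fin -PE_fin ?probability_le1 //; exact: mEv.
  have := sqr_ge0 p; lra.
- move=> i j ij.
  have := @cov_bound i j z ij; rewrite (PE_fin _ (measurableI _ _ (mEv i z) (mEv j z))) !Pi.
  have [k ->] : exists k, (j - i = k.+1)%N by exists (j - i).-1; rewrite prednK // subn_gt0.
  rewrite -(fineK (bfin k)) -!EFinM lee_fin /= => h.
  apply: le_trans (ler_norm _) _.
  rewrite /c expr2; lra.
- move=> N; rewrite -mulr_sumr; apply: ler_wpM2l => //.
Qed.
Lemma decomp i (F : Z -> R) w : F (Zv i w) = \sum_(z : Z) F z * \1_(Ev i z) w.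
Proof.
rewrite (bigD1 (Zv i w)) //= indicE mem_set // mulr1 big1 ?addr0 // => z' nz.
rewrite indicE memNset ?mulr0 // => /= h.
by move: nz; rewrite h eqxx.
Qed.

Lemma hcond_bound (mU : measurable_fun setT (Uv 0)) (Gb : R) (g : gfun R S m U) :
  0 <= Gb -> (forall a s, measurable_fun setT (g a s)) ->
  (forall a s u, `|g a s u| <= Gb) -> forall z, `|hcond P Zv Uv g z| <= Gb.
Proof.
move=> Gb0 mg gb z.
set f := fun w => g (A0 Zv w) (S0 Zv w) (U0 Uv w).
have mf : measurable_fun setT f.
  rewrite [X in measurable_fun _ X](_ : _ = fun w =>
     \sum_(z <- index_enum Z) g z.1.2 z.1.1 (Uv 0 w) * \1_(Ev 0 z) w); last first.
    by apply: funext => w; rewrite /f /A0 /S0 /U0 (decomp 0 (fun z => g z.1.2 z.1.1 (Uv 0 w))).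
  apply: measurable_sum => z'; apply: measurable_funM.
    exact: measurableT_comp.
  exact: measurable_indic (mEv _ _).
rewrite /hcond -/(Ev 0 z).
set I := (\int[P]_(w in Ev 0 z) _)%E.
have hI : (`|I| <= (Gb * fine (P (Ev 0 z)))%:E)%E.
  apply: le_trans (le_abse_integral _ (mEv 0 z) _) _.
    apply: measurableT_comp => //; exact: measurable_funS mf.
  apply: le_trans (_ : (\int[P]_(w in Ev 0 z) (cst Gb%:E) w <= _)%E).
    apply: ge0_le_integral => //; first exact: mEv.
    - apply: measurableT_comp => //; apply: measurableT_comp => //.
      exact: measurable_funS mf.
    - by move=> w _ /=; rewrite lee_fin.
  rewrite integral_cst; last exact: mEv.
  by rewrite EFinM -PE_fin //; exact: mEv.
have Ifin : I \is a fin_num.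
  by case: I hI => //.
have := PE_fin _ (mEv 0 z); set r := fine (P (Ev 0 z)) => Pr.
have r0 : 0 <= r by rewrite /r fine_ge0.
have [->|rpos] := eqVneq r 0; first by rewrite invr0 mulr0 normr0.
rewrite normrM normfV (ger0_norm r0) ler_pdivrMr ?lt_def ?rpos //.
by move: hI; rewrite -(fineK Ifin) /= lee_fin.
Qed.
Lemma sup_dev_bound (mU : measurable_fun setT (Uv 0)) nrm G (Gb : R) :
  0 <= Gb ->
  (forall g, Gstar nrm G g -> forall a s, measurable_fun setT (g a s)) ->
  (forall g, Gstar nrm G g -> forall a s u, `|g a s u| <= Gb) -> forall n w,
  (sup_dev P Zv Uv nrm G n w <= (Gb^+2 * \sum_(z : Z) `|Avg n z w - pz z|)%:E)%E.
Proof.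
move=> Gb0 hG hb n w.
apply: ub_ereal_sup => x [g Gg <-].
set h := hcond P Zv Uv g.
have hbz z : `|h z| <= Gb by apply: hcond_bound => //; [exact: hG | exact: hb].
have a0 z : 0 <= h z ^+ 2 by rewrite sqr_ge0.
have samp : n%:R^-1 * \sum_(i < n) h (Zv i w) ^+ 2 = \sum_(z : Z) h z ^+ 2 * Avg n z w.
  under eq_bigr do rewrite (decomp _ (fun z => h z ^+ 2) w).
  rewrite exchange_big /= mulr_sumr; apply: eq_bigr => z _.
  by rewrite /Avg -mulr_sumr mulrCA.
have integ : (\int[P]_v ((h (Zv 0 v)) ^+ 2)%:E =
    (\sum_(z : Z) h z ^+ 2 * pz z)%:E)%E.
  under eq_integral do rewrite (decomp 0 (fun z => h z ^+ 2)).
  by rewrite int_sum_indic // => z; exact: mEv.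
rewrite samp integ -EFinB /= lee_fin -sumrB.
apply: le_trans (ler_norm_sum _ _ _) _; rewrite mulr_sumr; apply: ler_sum => z _.
rewrite -mulrBr normrM ger0_norm //; apply: ler_wpM2r => //.
by move: (hbz z); rewrite ler_norml => /andP[h1 h2]; nra.
Qed.
Lemma sup_dev_local nrm G n w w' : (forall i : 'I_n, Zv i w = Zv i w') ->
  sup_dev P Zv Uv nrm G n w = sup_dev P Zv Uv nrm G n w'.
Proof.
move=> H; rewrite /sup_dev; congr ereal_sup; apply: eq_imagel => g _.
by congr (`| _ - _ |)%E; congr EFin; congr (_ * _); apply: eq_bigr => i _; rewrite H.
Qed.

Lemma event_meas (eps : R) nrm G n :
  measurable [set w | (eps%:E < sup_dev P Zv Uv nrm G n w)%E].
Proof.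
pose Cyl (t : {ffun 'I_n -> Z}) := \bigcap_(i in [set: 'I_n]) Ev i (t i).
pose Good := [set t | exists w, Cyl t w /\ (eps%:E < sup_dev P Zv Uv nrm G n w)%E].
have -> : [set w | (eps%:E < sup_dev P Zv Uv nrm G n w)%E] = \bigcup_(t in Good) Cyl t.
  apply/seteqP; split => w.
  - move=> hw; have Cw : Cyl [ffun i : 'I_n => Zv i w] w by move=> i _ /=; rewrite /Ev /= ffunE.
    by exists [ffun i : 'I_n => Zv i w] => //; exists w.
  - move=> [t [w' [Cw' hw']] Cw] /=.
    rewrite (@sup_dev_local _ _ _ w w') // => i.
    by rewrite (Cw i I) (Cw' i I).
apply: fin_bigcup_measurable; first exact: finite_finset.
move=> t _; apply: fin_bigcap_measurable; first exact: finite_finset.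
by move=> i _; exact: mEv.
Qed.
Lemma final (mU : forall i, measurable_fun setT (Uv i)) (st : stationary P Zv Uv)
  nrm G pp :
  (forall g, Gstar nrm G g -> forall a s, measurable_fun setT (g a s)) ->
  Mixing P Zv Uv pp -> UniformlyBounded nrm G ->
  forall eps : R, 0 < eps ->
    P [set w | (eps%:E < sup_dev P Zv Uv nrm G n w)%E] @[n --> \oo] --> 0%E.
Proof.
move=> mg mix [Gb [Gb0 hb]] eps eps0.
have [K hK] := int_bound st _ mix.
pose N := #|{: Z}|.
pose dl := eps / Gb ^+ 2.
have dl0 : 0 < dl by rewrite divr_gt0 // exprn_gt0.
pose c0 := (dl / N.+1%:R) ^+ 2.
have c00 : 0 < c0 by rewrite exprn_gt0 // divr_gt0.
pose C := (K *+ N) / c0.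
have bound n : (0 < n)%N ->
    (P [set w | (eps%:E < sup_dev P Zv Uv nrm G n w)%E] <= (C / n%:R)%:E)%E.
  move=> n0.
  set E := [set w | _].
  have mE : measurable E := event_meas eps nrm G n.
  pose Q w := \sum_(z : Z) (Avg n z w - pz z) ^+ 2.
  have mQ : measurable_fun setT Q.
    apply: measurable_sum => z; apply: measurable_funX.
    by apply: measurable_funB => //; exact: mAvg.
  have Q0 w : 0 <= Q w by apply: sumr_ge0 => z _; exact: sqr_ge0.
  pose T := [set w | c0 <= Q w].
  have mT : measurable T.
    rewrite [T](_ : _ = Q @^-1` `[c0, +oo[); last first.
      by apply/seteqP; split => w /=; rewrite in_itv /= andbT.
    rewrite -(setTI (Q @^-1` _)). exact: (mQ measurableT _ (measurable_itv _)).
  have ET : E `<=` T.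
    move=> w; rewrite /E /= => hw.
    have := lt_le_trans hw (@sup_dev_bound (mU 0%N) nrm G Gb (ltW Gb0) mg hb n w).
    rewrite lte_fin => hw2.
    have [z hz] : exists z, dl / N.+1%:R < `|Avg n z w - pz z|.
      apply: contrapT => hno.
      have hz z : `|Avg n z w - pz z| <= dl / N.+1%:R.
        by rewrite leNgt; apply/negP => h; apply: hno; exists z.
      have : \sum_(z : Z) `|Avg n z w - pz z| <= dl.
        apply: le_trans (ler_sum _ (fun z _ => hz z)) _.
        rewrite sumr_const -/N -[_ *+ N]mulr_natr mulrAC ler_pdivrMr ?ltr0n //.
        by rewrite ler_pM2l // ler_nat.
      move: hw2; rewrite /dl => hw2 hs.
      have : Gb ^+ 2 * \sum_(z : Z) `|Avg n z w - pz z| <= eps.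
        by rewrite -ler_pdivlMl ?exprn_gt0 // mulrC.
      by rewrite leNgt hw2.
    rewrite /T /= /Q (bigD1 z) //=.
    have s0 : 0 <= \sum_(i | i != z) (Avg n i w - pz i) ^+ 2.
      by apply: sumr_ge0 => ? _; exact: sqr_ge0.
    rewrite /c0.
    have e0 : 0 <= dl / N.+1%:R by rewrite divr_ge0 // ltW.
    move: hz s0; set D := Avg n z w - pz z; set a := dl / N.+1%:R.
    set s := \sum_(i | i != z) _ => hz s0.
    move: hz; rewrite ltr_normr => /orP[] h.
    - have : a * a <= D * D by apply: ler_pM => //; exact: ltW.
      rewrite !expr2; lra.
    - have : a * a <= (- D) * (- D) by apply: ler_pM => //; exact: ltW.
      rewrite mulrNN !expr2; lra.
  have markov : (c0%:E * P T <= \int[P]_w (Q w)%:E)%E.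
    have -> : (c0%:E * P T = \int[P]_w (c0 * \1_T w)%:E)%E.
      under eq_integral do rewrite EFinM.
      rewrite ge0_integralZl_EFin //; first by rewrite integral_indic // setIT.
      all: try (by move=> w _; rewrite lee_fin; case/andP: (indic01 T w)).
      all: try (by apply: measurableT_comp => //; exact: measurable_indic).
      all: try exact: ltW.
    apply: ge0_le_integral => //.
    - by move=> w _; rewrite lee_fin mulr_ge0 ?(ltW c00) //; case/andP: (indic01 T w).
    - apply: measurableT_comp => //; apply: measurable_funM => //.
      try exact: measurable_indic.
    - exact: measurableT_comp.
    - move=> w _; rewrite lee_fin indicE.
      case: (boolP (w \in T)) => [/set_mem|_]; first by rewrite mulr1.
      by rewrite mulr0.
  have IQ : (\int[P]_w (Q w)%:E <= ((K / n%:R) *+ N)%:E)%E.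
    under eq_integral do rewrite /Q -sumEFin.
    rewrite ge0_integral_sum //; last 2 first.
    - move=> z; apply: measurableT_comp => //; apply: measurable_funX.
      by apply: measurable_funB => //; exact: mAvg.
    - by move=> z w _; rewrite lee_fin sqr_ge0.
    apply: (@le_trans _ _ (\sum_(z : Z) (K / n%:R)%:E)%E).
      by apply: lee_sum => z _; exact: hK.
    by rewrite sumEFin sumr_const.
  have PT := PE_fin _ mT.
  apply: (@le_trans _ _ (P T)); first exact: (le_measure _ (mem_set mE) (mem_set mT) ET).
  rewrite (PE_fin _ mT) lee_fin.
  have := le_trans markov IQ; rewrite (PE_fin _ mT) -EFinM lee_fin => h.
  rewrite /= /C -[K *+ N]mulr_natr -[_ *+ N]mulr_natr in h *.
  rewrite mulrAC ler_pdivlMr // mulrC; apply: le_trans h _.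
  by rewrite mulrAC.
apply: (@squeeze_cvge _ _ _ _ (cst 0%E) _ (fun n => ((2 * `|C|) * harmonic n)%:E)).
- near=> n.
  have n0 : (0 < n)%N by near: n; exact: nbhs_infty_gt.
  apply/andP; split; first exact: measure_ge0.
  apply: le_trans (bound n n0) _; rewrite lee_fin /harmonic /=.
  have x0 := normr_ge0 C; have Cx := ler_norm C; set x := `|C| in x0 Cx *.
  have nn : 0 < n%:R :> R by rewrite ltr0n.
  rewrite ler_pdivrMr //.
  have h2 : 1 <= 2 * n%:R / n.+1%:R :> R.
    by rewrite ler_pdivlMr ?ltr0n // mul1r -natrM ler_nat; lia.
  have -> : 2 * x * n.+1%:R^-1 * n%:R = x * (2 * n%:R / n.+1%:R) by rewrite /=; field.
  apply: le_trans Cx _; rewrite -{1}[x]mulr1; exact: ler_wpM2l.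
- exact: cvg_cst.
- apply: cvg_EFin; first exact: nearW.
  have H := @cvgZl_tmp _ _ _ _ _ (2 * `|C|) _ _ (@cvg_harmonic R).
  rewrite scaler0 in H; exact: H.
Unshelve. all: by end_near.
Qed.
End Aux.

Theorem lemma6 (R : realType) (d : measure_display) (Omega : measurableType d)
  (P : probability Omega R) (S : finType) (m : nat) (dU : measure_display)
  (U : measurableType dU)
  (Zv : nat -> Omega -> Zobs S m) (Uv : nat -> Omega -> U)
  (nrm : gfun R S m U -> R) (G : set (gfun R S m U)) (p : \bar R) :
  (forall i z, measurable (Zv i @^-1` [set z])) ->
  (forall i, measurable_fun setT (Uv i)) ->
  stationary P Zv Uv ->
  is_norm nrm ->
  (forall g, Gstar nrm G g -> forall a s, measurable_fun setT (g a s)) ->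
  Mixing P Zv Uv p ->
  UniformlyBounded nrm G ->
  UniformBracketingEntropy P Zv Uv p nrm G ->
  forall eps : R, 0 < eps ->
    P [set w | (eps%:E < sup_dev P Zv Uv nrm G n w)%E] @[n --> \oo] --> 0%E.
Proof.
move=> mZ mU st _ mg mix ub _ eps eps0.
exact: (@final R d Omega P S m dU U Zv Uv mZ mU st nrm G p mg mix ub eps eps0).
Qed.
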